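(* Let $h(t)=\sqrt{1+\frac1t}$ and $H(t)=h(t)+\frac{1}{h(t)}$ for $t\in(0,\infty)$. Then for every integer $i\ge1$ and $t>0$, \[ h^{(i)}(t)=\frac{(-1)^i}{2^i t^{i+1}(1+t)^{i-1}h(t)}\sum_{k=0}^{i-1}a_{i,k}t^k,\qquad \Bigl[\frac{1}{h(t)}\Bigr]^{(i)}=\frac{(-1)^{i+1}}{2^i t^{i}(1+t)^{i}h(t)}\sum_{k=0}^{i-1}b_{i,k}t^k, \] \[ H^{(i)}(t)=\frac{(-1)^i}{2^i t^{i+1}(1+t)^{i}h(t)}\sum_{k=0}^{i-1}c_{i,k}t^k, \] where \[ a_{i,k}=\frac{(i-1)!\,i!\,(2i-2k-1)!!}{(i-k-1)!\,(i-k)!\,k!}2^k,\quad b_{i,k}=\frac{(i-1)!\,i!\,(2i-2k-3)!!}{(i-k-1)!\,(i-k)!\,k!}2^k,\quad c_{i,k}=\frac{(i-1)!\,(i+1)!\,(2i-2k-1)!!}{(i-k-1)!\,(i-k+1)!\,k!}2^k. \] Consequently, $h$ and $H$ are completely monotonic on $(0,\infty)$, and $\frac1h$ is a Bernstein function on $(0,\infty)$.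
   Context: Double factorials: $(2m-1)!!=1\cdot3\cdots(2m-1)$ for $m\ge1$, with $(-1)!!=1$. A function $f$ on an interval $I\subseteq\mathbb{R}$ is completely monotonic on $I$ if it has derivatives of all orders on $I$ and $(-1)^n f^{(n)}(t)\ge 0$ for all $t\in I$ and all integers $n\ge0$. A function $f:I\to[0,\infty)$ is a Bernstein function on $I$ if it has derivatives of all orders and $f'$ is completely monotonic on $I$. *)

(* Defs.v *)
From Stdlib Require Import Reals Factorial.
From Coquelicot Require Import Coquelicot.
Open Scope R_scope.

(* odd double factorial: dfact_odd m = (2m-1)!! = 1*3*...*(2m-1), with dfact_odd 0 = (-1)!! = 1 *)
Fixpoint dfact_odd (m : nat) : nat :=
  match m with
  | O => 1%nat
  | S m' => ((2 * m' + 1) * dfact_odd m')%nat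
  end.

Definition h (t : R) : R := sqrt (1 + / t).
Definition hinv (t : R) : R := / h t.
Definition HH (t : R) : R := h t + / h t.

(* a_{i,k}, b_{i,k}, c_{i,k} as real numbers; (2i-2k-1)!! = dfact_odd (i-k),
   (2i-2k-3)!! = dfact_odd (i-k-1) (for k <= i-1) *)
Definition a_coef (i k : nat) : R :=
  INR (fact (i - 1)) * INR (fact i) * INR (dfact_odd (i - k))
  / (INR (fact (i - k - 1)) * INR (fact (i - k)) * INR (fact k)) * 2 ^ k.
Definition b_coef (i k : nat) : R :=
  INR (fact (i - 1)) * INR (fact i) * INR (dfact_odd (i - k - 1))
  / (INR (fact (i - k - 1)) * INR (fact (i - k)) * INR (fact k)) * 2 ^ k.
Definition c_coef (i k : nat) : R :=
  INR (fact (i - 1)) * INR (fact (i + 1)) * INR (dfact_odd (i - k))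
  / (INR (fact (i - k - 1)) * INR (fact (i - k + 1)) * INR (fact k)) * 2 ^ k.

Definition completely_monotonic (f : R -> R) (I : R -> Prop) : Prop :=
  (forall (n : nat) (t : R), I t -> ex_derive_n f n t) /\
  (forall (n : nat) (t : R), I t -> 0 <= (-1) ^ n * Derive_n f n t).

Definition bernstein (f : R -> R) (I : R -> Prop) : Prop :=
  (forall t : R, I t -> 0 <= f t) /\
  (forall (n : nat) (t : R), I t -> ex_derive_n f n t) /\
  completely_monotonic (Derive f) I.

Definition pos_reals (t : R) : Prop := 0 < t.

(* Main.v *)
From Stdlib Require Import Reals Lra Lia Factorial.
From Coquelicot Require Import Coquelicot.
Require Import Defs.
Open Scope R_scope.

Lemma h_pos t : 0 < t -> 0 < h t.
Proof. intros Ht. unfold h. apply sqrt_lt_R0. assert (0 < / t) by (apply Rinv_0_lt_compat; lra). lra. Qed.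

Lemma h_sq t : 0 < t -> h t * h t = (1 + t) / t.
Proof. intros Ht. unfold h. rewrite sqrt_sqrt. field. lra.
  assert (0 < / t) by (apply Rinv_0_lt_compat; lra). lra. Qed.

Lemma h_deriv t : 0 < t -> is_derive h t (- h t / (2*t*(1+t))).
Proof. intros Ht. pose proof (h_pos t Ht) as Hp. pose proof (h_sq t Ht) as Hs.
  unfold h in *. auto_derive.
  { assert (0 < / t) by (apply Rinv_0_lt_compat; lra). repeat split; lra. }
  set (s := sqrt (1 + / t)) in *.
    replace (- s / (2*t*(1+t))) with (-(s*s) / (s*(2*t*(1+t)))) by (field; lra).
    rewrite Hs. field. split; lra.
Qed.

Lemma hinv_deriv t : 0 < t -> is_derive hinv t (hinv t / (2*t*(1+t))).
Proof. intros Ht. pose proof (h_pos t Ht).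
  eapply is_derive_ext. { intros u. reflexivity. }
  unfold hinv. replace (/ h t / (2*t*(1+t))) with (- (- h t / (2*t*(1+t))) / (h t)^2) by (field; lra).
  apply is_derive_inv. apply h_deriv; auto. lra.
Qed.

Definition Spoly (a : nat -> R) N t := sum_f_R0 (fun k => a k * t^k) N.
Definition Sder (a : nat -> R) N t := sum_f_R0 (fun k => a k * (INR k * t^(pred k))) N.

Lemma Spoly_deriv a N t : is_derive (Spoly a N) t (Sder a N t).
Proof.
  induction N.
  - unfold Spoly, Sder; simpl. eapply is_derive_ext. { intros u. reflexivity. }
    auto_derive. auto. simpl. ring.
  - unfold Spoly, Sder in *. eapply is_derive_ext. { intros u. symmetry. apply tech5. }
    rewrite tech5. apply (@is_derive_plus R_AbsRing R_NormedModule (fun u => sum_f_R0 (fun k => a k * u ^ k) N) (fun u => a (S N) * u ^ S N)). exact IHN.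
    auto_derive. trivial. simpl. ring.
Qed.

Lemma Sder_t a N t : t * Sder a N t = sum_f_R0 (fun k => INR k * a k * t^k) N.
Proof. induction N; unfold Sder in *; simpl.
  ring. rewrite Rmult_plus_distr_l, IHN. ring.
Qed.

Lemma sum_lin a N t c1 d1 c2 d2 :
  sum_f_R0 (fun k => (c1 - d1 * INR k) * a k * t^k + (c2 - d2 * INR k) * a k * t^(S k)) N
  = c1 * Spoly a N t + c2 * t * Spoly a N t - d1 * (t * Sder a N t) - d2 * t * (t * Sder a N t).
Proof. rewrite !Sder_t. unfold Spoly. induction N. simpl; ring. rewrite !tech5, IHN. simpl. ring. Qed.

Lemma shift_aux (c p q : nat -> R) n t : c 0%nat = p 0%nat ->
  (forall k, (k < n)%nat -> c (S k) = p (S k) + q k) ->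
  sum_f_R0 (fun k => c k * t^k) n + q n * t^(S n) =
  sum_f_R0 (fun k => p k * t^k + q k * t^(S k)) n.
Proof. intros H0. induction n; intros H. simpl. rewrite H0. ring.
  rewrite !tech5. rewrite <- IHn by (intros; apply H; lia). rewrite (H n) by lia. simpl. ring. Qed.

Lemma shift (c p q : nat -> R) n t : c 0%nat = p 0%nat ->
  (forall k, (k < n)%nat -> c (S k) = p (S k) + q k) -> c (S n) = q n ->
  sum_f_R0 (fun k => c k * t^k) (S n) =
  sum_f_R0 (fun k => p k * t^k + q k * t^(S k)) n.
Proof. intros H0 H Hn. rewrite tech5, Hn. apply shift_aux; auto. Qed.

Lemma pow_pred_eq m x : x <> 0 -> INR m * x ^ Init.Nat.pred m = INR m * x ^ m / x.
Proof. intros. destruct m. simpl; field; auto. simpl pred. simpl pow. field. auto. Qed.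

Lemma G_deriv K m n a N t : 0 < t ->
  is_derive (fun u => K / (u^m * (1+u)^n * h u) * Spoly a N u) t
   (K / (t^(S m) * (1+t)^(S n) * h t) * (t*(1+t)*Sder a N t - Spoly a N t * (INR m * (1+t) + INR n * t - /2))).
Proof. intros Ht. pose proof (h_pos t Ht). pose proof (h_deriv t Ht) as Hd.
  pose proof (Spoly_deriv a N t) as Hs.
  assert (t^m <> 0) by (apply pow_nonzero; lra).
  assert ((1+t)^n <> 0) by (apply pow_nonzero; lra).
  auto_derive.
  { repeat split; try (eexists; eassumption). apply Rmult_integral_contrapositive; split; [apply Rmult_integral_contrapositive; split|]; auto; lra. }
  replace (Derive (fun x : R => h x) t) with (- h t / (2 * t * (1 + t))) by (symmetry; apply is_derive_unique; exact Hd).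
  replace (Derive (fun x : R => Spoly a N x) t) with (Sder a N t) by (symmetry; apply is_derive_unique; exact Hs).
  rewrite (pow_pred_eq m t), (pow_pred_eq n (1+t)) by lra.
  simpl pow. field. repeat split; lra.
Qed.

Lemma loc_pos t : 0 < t -> locally t (fun u => 0 < u).
Proof. intros Ht. apply (open_gt 0). exact Ht. Qed.

Lemma fS n : INR (fact (S n)) = INR (S n) * INR (fact n).
Proof. rewrite fact_simpl, mult_INR. reflexivity. Qed.
Lemma dS m : INR (dfact_odd (S m)) = (2 * INR m + 1) * INR (dfact_odd m).
Proof. change (dfact_odd (S m)) with ((2*m+1)*dfact_odd m)%nat. rewrite mult_INR, plus_INR, mult_INR. simpl (INR 2). simpl (INR 1). ring. Qed.

Lemma a_cl i k j : i = S (k + j) -> a_coef i k =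
  INR (fact (k+j)) * INR (fact (S (k+j))) * INR (dfact_odd (S j)) / (INR (fact j) * INR (fact (S j)) * INR (fact k)) * 2^k.
Proof. intros ->. unfold a_coef. replace (S (k+j) - 1)%nat with (k+j)%nat by lia.
  replace (S (k+j) - k - 1)%nat with j by lia. replace (S (k+j) - k)%nat with (S j) by lia. reflexivity. Qed.
Lemma b_cl i k j : i = S (k + j) -> b_coef i k =
  INR (fact (k+j)) * INR (fact (S (k+j))) * INR (dfact_odd j) / (INR (fact j) * INR (fact (S j)) * INR (fact k)) * 2^k.
Proof. intros ->. unfold b_coef. replace (S (k+j) - 1)%nat with (k+j)%nat by lia.
  replace (S (k+j) - k - 1)%nat with j by lia. replace (S (k+j) - k)%nat with (S j) by lia. reflexivity. Qed.
Lemma c_cl i k j : i = S (k + j) -> c_coef i k =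
  INR (fact (k+j)) * INR (fact (S (S (k+j)))) * INR (dfact_odd (S j)) / (INR (fact j) * INR (fact (S (S j))) * INR (fact k)) * 2^k.
Proof. intros ->. unfold c_coef. replace (S (k+j) - 1)%nat with (k+j)%nat by lia.
  replace (S (k+j) + 1)%nat with (S (S (k+j))) by lia.
  replace (S (k+j) - k + 1)%nat with (S (S j)) by lia.
  replace (S (k+j) - k - 1)%nat with j by lia. replace (S (k+j) - k)%nat with (S j) by lia. reflexivity. Qed.

Ltac norm := rewrite ?Nat.add_succ_r, ?Nat.add_succ_l, ?Nat.add_0_l, ?Nat.add_0_r;
  rewrite ?fS, ?dS; rewrite ?S_INR, ?plus_INR; simpl pow; simpl (INR 0).
Ltac nzs := repeat split; try apply INR_fact_neq_0;
  repeat match goal with |- context [INR ?x] => 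
     lazymatch goal with H : 0 <= INR x |- _ => fail | _ => pose proof (pos_INR x) end end; lra.

Lemma A0 n : a_coef (S (S n)) 0 = (2 * INR (S n) + 1 - 2 * INR 0) * a_coef (S n) 0.
Proof. rewrite (a_cl _ 0 (S n)), (a_cl _ 0 n) by lia. norm. field. nzs. Qed.
Lemma Amid n k : (k < n)%nat -> a_coef (S (S n)) (S k) =
  (2 * INR (S n) + 1 - 2 * INR (S k)) * a_coef (S n) (S k) + (4 * INR (S n) - 2 * INR k) * a_coef (S n) k.
Proof. intros Hk. destruct (Nat.le_exists_sub (S k) n Hk) as [j [Hj _]]. 
  rewrite (a_cl _ (S k) (S j)), (a_cl _ (S k) j), (a_cl _ k (S j)) by lia. subst n. norm. field. nzs. Qed.
Lemma Atop n : a_coef (S (S n)) (S n) = (4 * INR (S n) - 2 * INR n) * a_coef (S n) n.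
Proof. rewrite (a_cl _ (S n) 0), (a_cl _ n 0) by lia. norm. field. nzs. Qed.
Lemma B0 n : b_coef (S (S n)) 0 = (2 * INR (S n) - 1 - 2 * INR 0) * b_coef (S n) 0.
Proof. rewrite (b_cl _ 0 (S n)), (b_cl _ 0 n) by lia. norm. field. nzs. Qed.
Lemma Bmid n k : (k < n)%nat -> b_coef (S (S n)) (S k) =
  (2 * INR (S n) - 1 - 2 * INR (S k)) * b_coef (S n) (S k) + (4 * INR (S n) - 2 * INR k) * b_coef (S n) k.
Proof. intros Hk. destruct (Nat.le_exists_sub (S k) n Hk) as [j [Hj _]]. 
  rewrite (b_cl _ (S k) (S j)), (b_cl _ (S k) j), (b_cl _ k (S j)) by lia. subst n. norm. field. nzs. Qed.
Lemma Btop n : b_coef (S (S n)) (S n) = (4 * INR (S n) - 2 * INR n) * b_coef (S n) n.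
Proof. rewrite (b_cl _ (S n) 0), (b_cl _ n 0) by lia. norm. field. nzs. Qed.
Lemma C0 n : c_coef (S (S n)) 0 = (2 * INR (S n) + 1 - 2 * INR 0) * c_coef (S n) 0.
Proof. rewrite (c_cl _ 0 (S n)), (c_cl _ 0 n) by lia. norm. field. nzs. Qed.
Lemma Cmid n k : (k < n)%nat -> c_coef (S (S n)) (S k) =
  (2 * INR (S n) + 1 - 2 * INR (S k)) * c_coef (S n) (S k) + (4 * INR (S n) + 2 - 2 * INR k) * c_coef (S n) k.
Proof. intros Hk. destruct (Nat.le_exists_sub (S k) n Hk) as [j [Hj _]]. 
  rewrite (c_cl _ (S k) (S j)), (c_cl _ (S k) j), (c_cl _ k (S j)) by lia. subst n. norm. field. nzs. Qed.
Lemma Ctop n : c_coef (S (S n)) (S n) = (4 * INR (S n) + 2 - 2 * INR n) * c_coef (S n) n.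
Proof. rewrite (c_cl _ (S n) 0), (c_cl _ n 0) by lia. norm. field. nzs. Qed.

Lemma deq (f : R -> R) (x l l' : R) : is_derive f x l -> l = l' -> is_derive f x l'.
Proof. intros H ->. exact H. Qed.

Ltac nzt t n := pose proof (h_pos t ltac:(assumption));
  assert (2^n <> 0) by (apply pow_nonzero; lra);
  assert (t^n <> 0) by (apply pow_nonzero; lra);
  assert ((1+t)^n <> 0) by (apply pow_nonzero; lra).

Definition FA (i : nat) (t : R) : R := match i with O => h t | S _ =>
  (-1) ^ i / (2 ^ i * t ^ (i + 1) * (1 + t) ^ (i - 1) * h t) * sum_f_R0 (fun k => a_coef i k * t ^ k) (i - 1) end.

Lemma FA_step n t : 0 < t -> is_derive (FA (S n)) t (FA (S (S n)) t).
Proof. intros Ht.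
  pose proof (G_deriv ((-1)^(S n)/2^(S n)) (S (S n)) n (a_coef (S n)) n t Ht) as HG.
  eapply deq. eapply is_derive_ext_loc; [|exact HG].
  { apply (filter_imp (fun u => 0 < u)); [|apply loc_pos; auto]. intros u Hu. nzt u n.
    unfold FA, Spoly. replace (S n + 1)%nat with (S (S n)) by lia. replace (S n - 1)%nat with n by lia.
    simpl pow. match goal with |- ?a = ?b => change (@eq R a b) end. field. repeat split; lra. }
  unfold FA. replace (S (S n) + 1)%nat with (S (S (S n))) by lia. replace (S (S n) - 1)%nat with (S n) by lia.
  rewrite (shift (a_coef (S (S n))) (fun k => (2 * INR (S n) + 1 - 2 * INR k) * a_coef (S n) k)
     (fun k => (4 * INR (S n) - 2 * INR k) * a_coef (S n) k) n t (A0 n) (Amid n) (Atop n)).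
  rewrite sum_lin. nzt t n. rewrite !S_INR. simpl pow. field. repeat split; lra.
Qed.

Definition FB (i : nat) (t : R) : R := match i with O => hinv t | S _ =>
  (-1) ^ (i + 1) / (2 ^ i * t ^ i * (1 + t) ^ i * h t) * sum_f_R0 (fun k => b_coef i k * t ^ k) (i - 1) end.

Lemma FB_step n t : 0 < t -> is_derive (FB (S n)) t (FB (S (S n)) t).
Proof. intros Ht.
  pose proof (G_deriv ((-1)^(S (S n))/2^(S n)) (S n) (S n) (b_coef (S n)) n t Ht) as HG.
  eapply deq. eapply is_derive_ext_loc; [|exact HG].
  { apply (filter_imp (fun u => 0 < u)); [|apply loc_pos; auto]. intros u Hu. nzt u n.
    unfold FB, Spoly. replace (S n + 1)%nat with (S (S n)) by lia. replace (S n - 1)%nat with n by lia.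
    simpl pow. match goal with |- ?a = ?b => change (@eq R a b) end. field. repeat split; lra. }
  unfold FB. replace (S (S n) + 1)%nat with (S (S (S n))) by lia. replace (S (S n) - 1)%nat with (S n) by lia.
  rewrite (shift (b_coef (S (S n))) (fun k => (2 * INR (S n) - 1 - 2 * INR k) * b_coef (S n) k)
     (fun k => (4 * INR (S n) - 2 * INR k) * b_coef (S n) k) n t (B0 n) (Bmid n) (Btop n)).
  rewrite sum_lin. nzt t n. rewrite !S_INR. simpl pow. field. repeat split; lra.
Qed.

Definition FC (i : nat) (t : R) : R := match i with O => HH t | S _ =>
  (-1) ^ i / (2 ^ i * t ^ (i + 1) * (1 + t) ^ i * h t) * sum_f_R0 (fun k => c_coef i k * t ^ k) (i - 1) end.

Lemma FC_step n t : 0 < t -> is_derive (FC (S n)) t (FC (S (S n)) t).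
Proof. intros Ht.
  pose proof (G_deriv ((-1)^(S n)/2^(S n)) (S (S n)) (S n) (c_coef (S n)) n t Ht) as HG.
  eapply deq. eapply is_derive_ext_loc; [|exact HG].
  { apply (filter_imp (fun u => 0 < u)); [|apply loc_pos; auto]. intros u Hu. nzt u n.
    unfold FC, Spoly. replace (S n + 1)%nat with (S (S n)) by lia. replace (S n - 1)%nat with n by lia.
    simpl pow. match goal with |- ?a = ?b => change (@eq R a b) end. field. repeat split; lra. }
  unfold FC. replace (S (S n) + 1)%nat with (S (S (S n))) by lia. replace (S (S n) - 1)%nat with (S n) by lia.
  rewrite (shift (c_coef (S (S n))) (fun k => (2 * INR (S n) + 1 - 2 * INR k) * c_coef (S n) k)
     (fun k => (4 * INR (S n) + 2 - 2 * INR k) * c_coef (S n) k) n t (C0 n) (Cmid n) (Ctop n)).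
  rewrite sum_lin. nzt t n. rewrite !S_INR. simpl pow. field. repeat split; lra.
Qed.

Lemma FA_0 t : 0 < t -> is_derive (FA 0) t (FA 1 t).
Proof. intros Ht. pose proof (h_pos t Ht). eapply deq. apply h_deriv; auto.
  pose proof (h_sq t Ht).
  unfold FA, a_coef. simpl. match goal with |- ?a = ?b => change (@eq R a b) end.
  replace (- h t / (2 * t * (1 + t))) with (- (h t * h t) / (h t * (2 * t * (1 + t)))) by (field; lra).
  rewrite H0. field. lra. Qed.
Lemma FB_0 t : 0 < t -> is_derive (FB 0) t (FB 1 t).
Proof. intros Ht. pose proof (h_pos t Ht). eapply deq. apply hinv_deriv; auto.
  unfold FB, b_coef, hinv. simpl. match goal with |- ?a = ?b => change (@eq R a b) end. field. lra. Qed.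
Lemma FC_0 t : 0 < t -> is_derive (FC 0) t (FC 1 t).
Proof. intros Ht. pose proof (h_pos t Ht). pose proof (h_sq t Ht).
  eapply deq. eapply is_derive_ext. { intros u. reflexivity. }
  apply (@is_derive_plus R_AbsRing R_NormedModule h hinv). apply h_deriv; auto. apply hinv_deriv; auto.
  unfold FC, c_coef, hinv. simpl. match goal with |- ?a = ?b => change (@eq R a b) end.
  unfold plus; simpl.
  replace (- h t / (2 * t * (1 + t)) + / h t / (2 * t * (1 + t))) with ((1 - h t * h t) / (h t * (2 * t * (1 + t)))) by (field; lra).
  rewrite H0. field. lra. Qed.

Lemma family (f : R -> R) (F : nat -> R -> R) :
  (forall t, 0 < t -> F 0%nat t = f t) ->
  (forall m t, 0 < t -> is_derive (F m) t (F (S m) t)) ->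
  forall m t, 0 < t -> Derive_n f m t = F m t /\ ex_derive_n f m t.
Proof. intros H0 HS m. induction m; intros t Ht.
  - simpl. split; [symmetry; auto | exact I].
  - assert (Hl : locally t (fun u => F m u = Derive_n f m u)).
    { apply (filter_imp (fun u => 0 < u)); [|apply loc_pos; auto]. intros u Hu. symmetry. apply IHm; auto. }
    split.
    + simpl. rewrite <- (Derive_ext_loc _ _ _ Hl). apply is_derive_unique. apply HS; auto.
    + simpl. eapply ex_derive_ext_loc; [exact Hl|]. eexists. apply HS; auto.
Qed.

Lemma FA_all m t : 0 < t -> is_derive (FA m) t (FA (S m) t).
Proof. destruct m. apply FA_0. apply FA_step. Qed.
Lemma FB_all m t : 0 < t -> is_derive (FB m) t (FB (S m) t).
Proof. destruct m. apply FB_0. apply FB_step. Qed.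
Lemma FC_all m t : 0 < t -> is_derive (FC m) t (FC (S m) t).
Proof. destruct m. apply FC_0. apply FC_step. Qed.

Definition hA := family h FA (fun t _ => eq_refl) FA_all.
Definition hB := family hinv FB (fun t _ => eq_refl) FB_all.
Definition hC := family HH FC (fun t _ => eq_refl) FC_all.

Lemma m1sq n : (-1)^n * (-1)^n = 1.
Proof. rewrite <- Rpow_mult_distr. replace (-1 * -1) with 1 by ring. apply pow1. Qed.

Lemma frac_nonneg x y z u v w k : 0 <= INR x * INR y * INR z / (INR (fact u) * INR (fact v) * INR (fact w)) * 2^k.
Proof. apply Rmult_le_pos; [|apply pow_le; lra]. unfold Rdiv. apply Rmult_le_pos.
  repeat apply Rmult_le_pos; apply pos_INR. left. apply Rinv_0_lt_compat.
  repeat apply Rmult_lt_0_compat; apply lt_0_INR, lt_O_fact. Qed.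

Lemma sum_nonneg (c : nat -> R) N t : 0 < t -> (forall k, 0 <= c k) -> 0 <= sum_f_R0 (fun k => c k * t^k) N.
Proof. intros Ht Hc. apply cond_pos_sum. intros k. apply Rmult_le_pos; auto. apply pow_le; lra. Qed.

Lemma sign1 e D S : 0 < D -> 0 <= S -> 0 <= (-1)^e * ((-1)^e / D * S).
Proof. intros. replace ((-1)^e * ((-1)^e / D * S)) with (((-1)^e * (-1)^e) * (S / D)) by (field; lra).
  rewrite m1sq. rewrite Rmult_1_l. apply Rmult_le_pos; auto. left; apply Rinv_0_lt_compat; auto. Qed.

Lemma sign2 n D Q : 0 < D -> 0 <= Q -> 0 <= (-1)^n * ((-1)^(S n + 1) / D * Q).
Proof. intros. replace (S n + 1)%nat with (n + 2)%nat by lia. rewrite pow_add.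
  replace ((-1)^n * ((-1)^n * (-1)^2 / D * Q)) with ((-1)^n * ((-1)^n / D * Q)) by (simpl; field; lra).
  apply sign1; auto. Qed.

Lemma Dn_D (f : R -> R) n t : Derive_n (Derive f) n t = Derive_n f (S n) t.
Proof. revert t. induction n; intros t. reflexivity. simpl. apply Derive_ext. intros u. apply IHn. Qed.

Lemma hinv_nonneg t : 0 < t -> 0 <= hinv t.
Proof. intros. unfold hinv. left. apply Rinv_0_lt_compat, h_pos; auto. Qed.

Ltac dpos t i := pose proof (h_pos t ltac:(assumption));
  repeat apply Rmult_lt_0_compat; try apply pow_lt; lra.

Theorem lemma2p1 :
  (forall (i : nat) (t : R), (1 <= i)%nat -> 0 < t ->
     Derive_n h i t =
       (-1) ^ i / (2 ^ i * t ^ (i + 1) * (1 + t) ^ (i - 1) * h t)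
       * sum_f_R0 (fun k => a_coef i k * t ^ k) (i - 1)
  /\ Derive_n hinv i t =
       (-1) ^ (i + 1) / (2 ^ i * t ^ i * (1 + t) ^ i * h t)
       * sum_f_R0 (fun k => b_coef i k * t ^ k) (i - 1)
  /\ Derive_n HH i t =
       (-1) ^ i / (2 ^ i * t ^ (i + 1) * (1 + t) ^ i * h t)
       * sum_f_R0 (fun k => c_coef i k * t ^ k) (i - 1))
  /\ completely_monotonic h pos_reals
  /\ completely_monotonic HH pos_reals
  /\ bernstein hinv pos_reals.
Proof.
  split; [|split; [|split]].
  - intros i t Hi Ht. destruct i as [|n]; [lia|].
    split; [|split].
    + exact (proj1 (hA (S n) t Ht)).
    + exact (proj1 (hB (S n) t Ht)).
    + exact (proj1 (hC (S n) t Ht)).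
  - split. intros n t Ht. exact (proj2 (hA n t Ht)).
    intros n t Ht. unfold pos_reals in Ht. rewrite (proj1 (hA n t Ht)). destruct n as [|n].
    + simpl. rewrite Rmult_1_l. left; apply h_pos; auto.
    + unfold FA. apply sign1. dpos t n. apply sum_nonneg; auto. intros k; apply frac_nonneg.
  - split. intros n t Ht. exact (proj2 (hC n t Ht)).
    intros n t Ht. unfold pos_reals in Ht. rewrite (proj1 (hC n t Ht)). destruct n as [|n].
    + simpl. rewrite Rmult_1_l. pose proof (h_pos t Ht). left. unfold HH.
      pose proof (Rinv_0_lt_compat _ H). lra.
    + unfold FC. apply sign1. dpos t n. apply sum_nonneg; auto. intros k; apply frac_nonneg.
  - split; [|split].
    + intros t Ht. apply hinv_nonneg; auto.
    + intros n t Ht. exact (proj2 (hB n t Ht)).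
    + split.
      * intros n t Ht. destruct n as [|n]. exact I. simpl.
        eapply ex_derive_ext. { intros u. symmetry. apply Dn_D. }
        exact (proj2 (hB (S (S n)) t Ht)).
      * intros n t Ht. unfold pos_reals in Ht. rewrite Dn_D, (proj1 (hB (S n) t Ht)).
        unfold FB. apply sign2. dpos t n. apply sum_nonneg; auto. intros k; apply frac_nonneg.
Qed.
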